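(* Let $n\ge2$, $k\ge1$, and let $L_1,\dots,L_n$ be commuting indeterminates over $\mathbb{K}=\mathbb{C}(q)$. Let $G_{n,k}=\sum_{i=1}^n L_i^k\prod_{j\ne i}\frac{qL_i-q^{-1}L_j}{L_i-L_j}$. For $1\le i\le\min(k,n)$ let $\Gamma_{k,i}=s_{(k-i+1,1^{i-1})}(L_1,\dots,L_n)$ be the Schur polynomial of the hook partition $(k-i+1,1^{i-1})$, i.e. the character of the irreducible $\mathfrak{gl}_n$-module of highest weight $(k-i+1)\epsilon_1+\epsilon_2+\cdots+\epsilon_i$ with $e^{\epsilon_j}$ replaced by $L_j$; set $\Gamma_{k,i}=0$ if $i>k$. Then $G_{n,k}=\sum_{i=1}^n(-1)^{i-1}q^{n-2i+1}\Gamma_{k,i}$.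
   Context: In the paper $L_i=q^{n-2i+1}K_i^2$ are elements of the commutative subalgebra of $\mathrm{U}_q(\mathfrak{gl}_n)$ generated by the $K_i^{\pm1}$, in which they are algebraically independent. *)

(* Defs.v *)
From HB Require Import structures.
From mathcomp Require Import all_boot all_order all_algebra.
From mathcomp Require Import fraction.
From mathcomp.multinomials Require Import mpoly.
From mathcomp Require Import reals.
From mathcomp.real_closed Require Import complex.

Set Implicit Arguments.
Unset Strict Implicit.
Unset Printing Implicit Defensive.
Import Order.TTheory GRing.Theory Num.Theory.
Local Open Scope ring_scope.

Definition Cx (R : realType) := (R[i])%type.
Definition Kq (R : realType) := {fraction {poly Cx R}}.
Definition Frac (R : realType) (n : nat) := {fraction {mpoly Kq R[n]}}.

Definition qK (R : realType) : Kq R := FracField.tofrac ('X : {poly Cx R}).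
(* q and L_i seen in K(L_1,...,L_n) (0-based index i) *)
Definition qF (R : realType) (n : nat) : Frac R n :=
  FracField.tofrac ((qK R)%:MP : {mpoly Kq R[n]}).
Definition Lv (R : realType) (n : nat) (i : 'I_n) : Frac R n :=
  FracField.tofrac ('X_i : {mpoly Kq R[n]}).

Definition Gnk (R : realType) (n k : nat) : Frac R n :=
  \sum_(i < n) (Lv R i ^+ k *
     \prod_(j < n | j != i)
        ((qF R n * Lv R i - (qF R n)^-1 * Lv R j) / (Lv R i - Lv R j))).

(* Schur polynomial s_lam(L_1..L_n) for a partition lam = (lam_0 >= ... >= lam_{n-1})
   given by the bialternant (Weyl character) formula
   det(L_a^(lam_b + n-1-b)) / det(L_a^(n-1-b)). *)
Definition schur (R : realType) (n : nat) (lam : 'I_n -> nat) : Frac R n :=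
  \det (\matrix_(a < n, b < n) (Lv R a ^+ (lam b + (n - 1 - b))%N))
  / \det (\matrix_(a < n, b < n) (Lv R a ^+ (n - 1 - b)%N)).

(* hook partition (k-i+1, 1^(i-1)) with i 1-based, as an n-part sequence *)
Definition hook (n k i : nat) : 'I_n -> nat :=
  fun j => if (nat_of_ord j == 0)%N then (k - i + 1)%N
           else if (j < i)%N then 1%N else 0%N.

(* Gamma_{k,i}, i 1-based, zero when i > k *)
Definition Gamma (R : realType) (n k i : nat) : Frac R n :=
  if (i <= k)%N then @schur R n (@hook n k i) else 0.

(* Main.v *)
Require Import Defs.
From HB Require Import structures.
From mathcomp Require Import all_boot all_order all_algebra.
From mathcomp Require Import zify ring.
Import Order.TTheory GRing.Theory Num.Theory.
Local Open Scope ring_scope.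

Section Gen.
Variables (F : fieldType) (n : nat) (x : 'I_n -> F).
Hypothesis xinj : injective x.

Definition Wm : 'M[F]_n := \matrix_(a < n, b < n) x a ^+ (n - 1 - b).
Definition den (a : 'I_n) : F := \prod_(j < n | j != a) (x a - x j).
Definition ell (a : 'I_n) : {poly F} :=
  (den a)^-1 *: \prod_(j < n | j != a) ('X - (x j)%:P).

Lemma den_neq0 a : den a != 0.
Proof.
rewrite /den; apply/prodf_neq0 => j ja; rewrite subr_eq0; apply/eqP => /xinj.
by move/eqP: ja => ja /esym.
Qed.

Lemma size_ell a : (size (ell a) <= n)%N.
Proof.
apply: leq_trans (size_scale_leq _ _) _.
rewrite size_prod; last by move=> j _; rewrite -size_poly_eq0 size_XsubC.
rewrite (eq_bigr (fun _ => 2%N)); last by move=> j _; rewrite size_XsubC.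
rewrite sum_nat_const.
rewrite (_ : #|_| = n.-1); last first.
  have := cardC1 a; rewrite card_ord => <-; exact: eq_card.
case: n a => [|m] a; first by case: a.
rewrite /=; lia.
Qed.

Lemma ell_eval a r : (ell a).[x r] = (r == a)%:R.
Proof.
rewrite /ell hornerZ horner_prod.
under eq_bigr do rewrite hornerXsubC.
case: eqP => [->|ra].
  by rewrite -/(den a) mulVf // den_neq0.
rewrite (bigD1 r) /=; last by apply/eqP.
by rewrite subrr mul0r mulr0.
Qed.

Definition Cm : 'M[F]_n := \matrix_(m < n, a < n) (ell a)`_(n - 1 - m).

Lemma WC : Wm *m Cm = 1%:M.
Proof.
apply/matrixP => r a; rewrite !mxE.
rewrite -ell_eval (horner_coef_wide _ (size_ell a)).
rewrite (reindex_inj rev_ord_inj) /=.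
apply: eq_bigr => m _; rewrite !mxE.
have -> : (n - 1 - rev_ord m = m)%N by rewrite /=; have := ltn_ord m; lia.
exact: mulrC.
Qed.

Lemma CW : Cm *m Wm = 1%:M.
Proof. exact: mulmx1C WC. Qed.

Lemma detW_neq0 : \det Wm != 0.
Proof.
apply/eqP => h; have := congr1 determinant WC.
by rewrite det_mulmx h mul0r det1 => /eqP; rewrite eq_sym oner_eq0.
Qed.

Lemma adjW : \adj Wm = \det Wm *: Cm.
Proof.
by rewrite -[\adj Wm]mulmx1 -WC mulmxA mul_adj_mx mul_scalar_mx.
Qed.


Lemma sgn2 (m : nat) : (-1) ^+ m * (-1) ^+ m = 1 :> F.
Proof. by rewrite -exprD addnn -mul2n exprM expr2 mulrNN mulr1 expr1n. Qed.

Variable k : nat.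
Definition Hm (m : 'I_n) : 'M[F]_n :=
  \matrix_(a < n, b < n) x a ^+ (@hook n k m.+1 b + (n - 1 - b)).

Variables (i0 : 'I_n).
Hypothesis h0 : nat_of_ord i0 = 0%N.

Lemma colH m : col' i0 (Hm m) = col' m Wm.
Proof.
apply/matrixP => r j; rewrite !mxE; congr (_ ^+ _).
rewrite /hook /= /bump h0 /=.
have := ltn_ord j; have := ltn_ord m.
case: (leqP m j) => hj /=; case: ifP => /= h1; try lia.
Qed.

Lemma detH m : \det (Hm m) =
  (-1) ^+ m * \det Wm * \sum_a x a ^+ (@hook n k m.+1 i0 + (n - 1 - i0)) * Cm m a.
Proof.
rewrite (expand_det_col _ i0) mulr_sumr; apply: eq_bigr => a _.
have hc : cofactor Wm a m = \det Wm * Cm m a.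
  by have := congr1 (fun M : 'M_n => M m a) adjW; rewrite !mxE.
rewrite /cofactor colH mxE.
move: hc; rewrite /cofactor => hc.
rewrite h0 addn0.
have -> : (-1) ^+ a * \det (row' a (col' m Wm)) =
   (-1) ^+ m * ((-1) ^+ (a + m) * \det (row' a (col' m Wm))).
  by rewrite exprD mulrA mulrA (mulrC _ ((-1) ^+ a)) -mulrA -[in RHS]mulrA (mulrA ((-1) ^+ m)) sgn2 mul1r.
rewrite hc; ring.
Qed.

Lemma horner_rev (p : {poly F}) y : (size p <= n)%N ->
  \sum_(i < n) p`_(n - 1 - i) * y ^+ (n - 1 - i) = p.[y].
Proof.
move=> sp; rewrite (horner_coef_wide _ sp) (reindex_inj rev_ord_inj) /=.
apply: eq_bigr => m _.
by have -> : (n - 1 - rev_ord m = m)%N by rewrite /=; have := ltn_ord m; lia.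
Qed.

Lemma card_neq (a : 'I_n) : #|[pred j : 'I_n | j != a]| = n.-1.
Proof. have := cardC1 a; rewrite card_ord => <-; exact: eq_card. Qed.

Lemma zexp (q : F) (i : nat) : q != 0 -> (i < n)%N ->
  q ^ ((n%:Z) - 2 * (i.+1)%:Z + 1) = q^-1 ^+ (n - 1) * (q ^+ 2) ^+ (n - 1 - i).
Proof.
move=> q0 lin.
have -> : ((n%:Z) - 2 * (i.+1)%:Z + 1) = - ((n - 1)%N)%:Z + ((2 * (n - 1 - i))%N)%:Z by lia.
by rewrite expfzDr // -exprnN exprVn -exprM.
Qed.

Lemma Sterm (i : 'I_n) : (1 <= k)%N ->
  (-1) ^+ i * (if (i.+1 <= k)%N then \det (Hm i) / \det Wm else 0) =
  \sum_a x a ^+ (k + (n - 1 - i)) * Cm i a.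
Proof.
move=> k1; case: ifP => ik.
  rewrite detH.
  set S := \sum_a _; set D := \det Wm.
  have D0 : D != 0 by exact: detW_neq0.
  have -> : (-1) ^+ i * ((-1) ^+ i * D * S / D) = S.
    by rewrite [_ * D * S]mulrAC mulfK // mulrA sgn2 mul1r.
  rewrite /S.
  apply: eq_bigr => a _; congr (x a ^+ _ * _).
  rewrite /hook h0 /=; have := ltn_ord i; clear -ik; move: (nat_of_ord i) ik => j ik; lia.
move/negbT: ik; rewrite -leqNgt => ik.
have lb : (i - k < n)%N by have := ltn_ord i; lia.
have -> : \sum_a x a ^+ (k + (n - 1 - i)) * Cm i a = (Cm *m Wm) i (Ordinal lb).
  rewrite mxE; apply: eq_bigr => a _; rewrite mxE mulrC /=.
  rewrite mxE; congr (_ * x a ^+ _); rewrite /=; have := ltn_ord i; clear -ik; lia.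
rewrite CW mxE mulr0; case: eqP => //= /(congr1 val) /=; clear -ik k1; lia.
Qed.

Lemma perA (q : F) (a : 'I_n) : q != 0 ->
  \sum_(i < n) q ^ ((n%:Z) - 2 * (i.+1)%:Z + 1) * x a ^+ (n - 1 - i) * Cm i a =
  \prod_(j < n | j != a) ((q * x a - q^-1 * x j) / (x a - x j)).
Proof.
move=> q0.
transitivity (q^-1 ^+ (n - 1) * (ell a).[q ^+ 2 * x a]).
  rewrite -horner_rev ?size_ell // mulr_sumr; apply: eq_bigr => i _.
  rewrite zexp // mxE [in RHS]exprMn.
  set Q := q^-1 ^+ _; ring.
rewrite /ell hornerZ horner_prod big_split /= prodfV -/(den a).
under eq_bigr do rewrite hornerXsubC.
rewrite mulrCA [LHS]mulrC; congr (_ * _).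
rewrite subn1 -(card_neq a) -prodr_const -big_split /=.
apply: eq_bigr => j _; field.
exact: q0.
Qed.

Lemma mainG (q : F) : q != 0 -> (1 <= k)%N ->
  \sum_(a < n) (x a ^+ k * \prod_(j < n | j != a)
        ((q * x a - q^-1 * x j) / (x a - x j))) =
  \sum_(i < n) ((-1) ^+ i * q ^ ((n%:Z) - 2 * (i.+1)%:Z + 1)
      * (if (i.+1 <= k)%N then \det (Hm i) / \det Wm else 0)).
Proof.
move=> q0 k1.
rewrite [RHS](eq_bigr (fun i : 'I_n => q ^ ((n%:Z) - 2 * (i.+1)%:Z + 1) *
    \sum_a x a ^+ (k + (n - 1 - i)) * Cm i a)); last first.
  by move=> i _; rewrite -Sterm // mulrAC mulrC.
under [RHS]eq_bigr do rewrite mulr_sumr.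
rewrite exchange_big; apply: eq_bigr => a _.
rewrite -perA // mulr_sumr; apply: eq_bigr => i _.
rewrite exprD; ring.
Qed.

End Gen.

From mathcomp Require Import fraction.
From mathcomp.multinomials Require Import mpoly.
From mathcomp Require Import reals.
From mathcomp.real_closed Require Import complex.

Lemma Lv_inj (R : realType) (n : nat) : injective (@Lv R n).
Proof.
move=> i j /eqP; rewrite /Lv tofrac_eq => /eqP h.
have := congr1 (fun p : {mpoly Kq R[n]} => p@_U_(i)) h; rewrite /= !mcoeffXU eqxx.
by case: eqP => [->//|_ /eqP]; rewrite oner_eq0.
Qed.

Lemma qF_neq0 (R : realType) (n : nat) : qF R n != 0.
Proof. by rewrite /qF tofrac_eq0 mpolyC_eq0 /qK tofrac_eq0 polyX_eq0. Qed.

Theorem corollary3p4 (R : realType) (n k : nat) :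
  (2 <= n)%N -> (1 <= k)%N ->
  Gnk R n k =
  \sum_(i < n) ((-1) ^+ i * qF R n ^ ((n%:Z) - 2 * (i.+1)%:Z + 1)
                 * Gamma R n k i.+1).
Proof.
move=> n2 k1.
pose i0 : 'I_n := Ordinal (ltnW n2).
rewrite /Gnk (@mainG _ _ _ (@Lv_inj R n) k i0 (erefl _) _ (qF_neq0 R n) k1).
by apply: eq_bigr => i _; congr (_ * _).
Qed.
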